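(* Let $\mathbf{S}$ be a distributive meet semilattice, $n\ge1$ an integer and $F$ an upset of $\mathbf{S}$. The following are equivalent: (i) $F$ is a prime $n$-filter; (ii) $F$ is a prime upset which is a union of at most $n$ filters; (iii) $F$ is a prime upset and there is a meet-semilattice homomorphism $h\colon\mathbf{S}\to\mathbf{2}^n$ with $F=h^{-1}[P_n]$, where $\mathbf{2}^n$ is the Boolean lattice with $n$ atoms and $P_n$ its set of non-zero elements.
   Context: A meet semilattice is distributive if whenever $x\wedge y\le z$ there are $x'\ge x$, $y'\ge y$ with $x'\wedge y'=z$. For a set $X$, $Y\subseteq_n X$ means $Y$ is a non-empty subset of $X$ with $|Y|\le n$. An $n$-filter on $\mathbf{S}$ is an upset $F$ such that for every non-empty finite $X\subseteq F$: if $\bigwedge Y\in F$ for every $Y\subseteq_n X$ then $\bigwedge X\in F$; a filter is a $1$-filter (possibly empty or total). An upset $F$ of $\mathbf{S}$ is prime if its complement $\mathbf{S}\setminus F$ is upward directed, i.e. any two elements outside $F$ have a common upper bound outside $F$ (the empty complement counts). A prime $n$-filter is an $n$-filter which is a prime upset (equivalently, a meet-prime element of the lattice of $n$-filters on $\mathbf{S}$). *)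

(* Defs.v *)
From HB Require Import structures.
From mathcomp Require Import all_boot all_order.
Set Implicit Arguments. Unset Strict Implicit. Unset Printing Implicit Defensive.

Section Defs.
Context {d : Order.disp_t} {S : meetSemilatticeType d}.

Definition smeet (x : S) (s : seq S) : S := foldr Order.meet x s.

Definition distributive_msl : Prop :=
  forall x y z : S, (Order.meet x y <= z)%O ->
    exists x' y' : S, (x <= x')%O /\ (y <= y')%O /\ Order.meet x' y' = z.

Definition upset (F : S -> Prop) : Prop :=
  forall x y : S, (x <= y)%O -> F x -> F y.

(* n-filter: an upset F such that for every non-empty finite X ⊆ F
   (given by a non-empty list x0 :: xs), if the meet of every non-empty
   Y ⊆ X with |Y| <= n lies in F (Y given by a non-empty list y0 :: ys of
   elements of X with at most n distinct entries), then ⋀X ∈ F. *)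
Definition nfilter (n : nat) (F : S -> Prop) : Prop :=
  upset F /\
  forall (x0 : S) (xs : seq S),
    (forall x, x \in x0 :: xs -> F x) ->
    (forall (y0 : S) (ys : seq S),
        (forall y, y \in y0 :: ys -> y \in x0 :: xs) ->
        size (undup (y0 :: ys)) <= n ->
        F (smeet y0 ys)) ->
    F (smeet x0 xs).

Definition msl_filter (F : S -> Prop) : Prop := nfilter 1 F.

(* prime upset: complement is upward directed (empty complement allowed) *)
Definition prime_upset (F : S -> Prop) : Prop :=
  upset F /\
  forall x y : S, ~ F x -> ~ F y ->
    exists z : S, (x <= z)%O /\ (y <= z)%O /\ ~ F z.

Definition prime_nfilter (n : nat) (F : S -> Prop) : Prop :=
  nfilter n F /\ prime_upset F.

(* meet-semilattice homomorphism into the Boolean lattice 2^n,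
   represented as {set 'I_n} (subsets of an n-element set, meet = :&:) *)
Definition msl_hom (n : nat) (h : S -> {set 'I_n}) : Prop :=
  forall x y : S, h (Order.meet x y) = h x :&: h y.

End Defs.

(* Main.v *)
Require Import Defs.
From mathcomp Require Import all_boot all_order.
From Stdlib Require Import ClassicalEpsilon Classical.
Set Implicit Arguments. Unset Strict Implicit. Unset Printing Implicit Defensive.
Import Order.Theory.

Section Aux.
Context {d : Order.disp_t} {S : meetSemilatticeType d}.
Local Open Scope order_scope.

Lemma smeet_le (x0 : S) xs y : y \in x0 :: xs -> smeet x0 xs <= y.
Proof.
elim: xs y => [|x xs IH] y /=.
  by rewrite inE => /eqP ->.
rewrite !inE => /orP [/eqP ->|/orP [/eqP ->|Hy]].
- apply: le_trans (leIr _ _) _; apply: IH; exact: mem_head.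
- exact: leIl.
- apply: le_trans (leIr _ _) _; apply: IH; by rewrite inE Hy orbT.
Qed.

Lemma le_smeet (t x0 : S) xs : (forall y, y \in x0 :: xs -> t <= y) -> t <= smeet x0 xs.
Proof.
elim: xs => [|x xs IH] /= H.
  by apply: H; exact: mem_head.
rewrite lexI; apply/andP; split.
  by apply: H; rewrite !inE eqxx orbT.
apply: IH => y; rewrite inE => /orP [/eqP ->|Hy]; apply: H.
  exact: mem_head.
by rewrite !inE Hy !orbT.
Qed.

Fixpoint mfold (f : nat -> S) (k : nat) : S :=
  if k is k'.+1 then mfold f k' `&` f k else f 0%N.

Lemma mfold_le f k i : (i <= k)%N -> mfold f k <= f i.
Proof.
elim: k => [|k IH] /=.
  by rewrite leqn0 => /eqP ->.
rewrite leq_eqVlt => /orP [/eqP ->|Hi].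
  exact: leIr.
apply: le_trans (leIl _ _) _; exact: IH.
Qed.

Lemma le_mfold f k t : (forall i, (i <= k)%N -> t <= f i) -> t <= mfold f k.
Proof.
elim: k => [|k IH] /= H.
  exact: H.
rewrite lexI; apply/andP; split.
  apply: IH => i Hi; apply: H; exact: leqW.
exact: H.
Qed.

Lemma choice_fun {A B : Type} (P : A -> B -> Prop) :
  (forall a, exists b, P a b) -> exists f : A -> B, forall a, P a (f a).
Proof.
move=> H.
exists (fun a => proj1_sig (constructive_indefinite_description _ (H a))).
move=> a; exact: proj2_sig.
Qed.

Lemma distD (dist : distributive_msl (S := S)) :
  forall k (a : nat -> S) (z : S),
  (forall i j, (i <= k)%N -> (j <= k)%N -> i != j -> a i `&` a j <= z) ->
  exists w : nat -> S,
    (forall i j, (i <= k)%N -> (j <= k)%N -> i != j -> a j <= w i) /\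
    (forall i, (i <= k)%N -> z <= w i) /\
    (forall t, (forall i, (i <= k)%N -> t <= w i) -> t <= z).
Proof.
elim=> [|k IH] a z Hz.
  exists (fun _ => z); split; [|split].
  - by move=> i j; rewrite !leqn0 => /eqP -> /eqP ->; rewrite eqxx.
  - by [].
  - move=> t Ht; exact: (Ht 0%N).
have [v [Hv1 [Hv2 Hv3]]] : exists w : nat -> S,
    (forall i j, (i <= k)%N -> (j <= k)%N -> i != j -> a j <= w i) /\
    (forall i, (i <= k)%N -> z <= w i) /\
    (forall t, (forall i, (i <= k)%N -> t <= w i) -> t <= z).
  apply: IH => i j Hi Hj Hij; apply: Hz => //; exact: leqW.
set A := a k.+1.
have Hpq : forall i, exists pq : S * S, (i <= k)%N ->
    a i <= pq.1 /\ A <= pq.2 /\ pq.1 `&` pq.2 = v i.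
  move=> i; case: (boolP (i <= k)%N) => Hi; last by exists (A, A).
  have H1 : a i `&` A <= v i.
    apply: le_trans (Hv2 _ Hi); apply: Hz => //; first exact: leqW.
    by apply/negP => /eqP Ei; move: Hi; rewrite Ei ltnn.
  have [p [q [Hp [Hq Hpq]]]] := dist _ _ _ H1.
  by exists (p, q).
have [f Hf] := choice_fun Hpq.
set p := fun i => (f i).1.
set q := fun i => (f i).2.
have vq : forall i, (i <= k)%N -> v i <= q i.
  by move=> i Hi; have [_ [_ <-]] := Hf i Hi; exact: leIr.
have vp : forall i, (i <= k)%N -> v i <= p i.
  by move=> i Hi; have [_ [_ <-]] := Hf i Hi; exact: leIl.
exists (fun i => if (i <= k)%N then q i else mfold p k); split; [|split].
- move=> i j Hi Hj Hij; case: ifP => Hik.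
    move: Hj; rewrite leq_eqVlt => /orP [/eqP ->|Hj].
      by have [_ [HA _]] := Hf i Hik.
    apply: le_trans (vq _ Hik); exact: Hv1.
  have Ei : i = k.+1.
    by apply/eqP; rewrite eqn_leq Hi /= ltnNge Hik.
  have Hjk : (j <= k)%N.
    by move: Hj; rewrite leq_eqVlt => /orP [/eqP Ej|//]; move: Hij; rewrite Ei Ej eqxx.
  apply: le_mfold => l Hl.
  case: (eqVneq l j) => [->|Hlj].
    by have [Ha _] := Hf j Hjk.
  apply: le_trans (vp _ Hl); apply: Hv1 => //.
- move=> i Hi; case: ifP => Hik.
    apply: le_trans (vq _ Hik); exact: Hv2.
  apply: le_mfold => l Hl; apply: le_trans (vp _ Hl); exact: Hv2.
- move=> t Ht; apply: Hv3 => i Hi.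
  have [_ [_ <-]] := Hf i Hi.
  rewrite lexI; apply/andP; split.
    have := Ht k.+1 (leqnn _); rewrite ltnn => H.
    apply: le_trans H _; exact: mfold_le.
  have := Ht i (leqW Hi); by rewrite Hi.
Qed.

Variable F : S -> Prop.

Lemma nF_le x y : upset F -> x <= y -> ~ F y -> ~ F x.
Proof. by move=> Hu Hxy Hy Hx; apply: Hy; exact: Hu Hxy Hx. Qed.

Lemma dirL (pr : prime_upset F) (L : seq S) (c : S) :
  ~ F c -> (forall y, y \in L -> ~ F y) ->
  exists z, ~ F z /\ c <= z /\ forall y, y \in L -> y <= z.
Proof.
elim: L => [|y L IH] Hc HL.
  by exists c; split; [|split].
have [z0 [Hz0 [Hcz0 HLz0]]] : exists z, ~ F z /\ c <= z /\ forall y, y \in L -> y <= z.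
  by apply: IH => // y' Hy'; apply: HL; rewrite inE Hy' orbT.
have [z [Hz0z [Hyz Hz]]] := pr.2 _ _ Hz0 (HL y (mem_head _ _)).
exists z; split => //; split; first exact: le_trans Hcz0 Hz0z.
move=> y'; rewrite inE => /orP [/eqP ->//|Hy'].
apply: le_trans (HLz0 _ Hy') Hz0z.
Qed.

Lemma pigeon (s : seq nat) n : (size s <= n)%N -> exists k, (k < n.+1)%N /\ k \notin s.
Proof.
move=> Hs; case: (boolP (all (fun k => k \in s) (iota 0 n.+1))) => H.
  have : (size (iota 0 n.+1) <= size s)%N.
    apply: uniq_leq_size; first exact: iota_uniq.
    by move=> x Hx; move/allP: H => /(_ x Hx).
  by rewrite size_iota => H2; have := leq_trans H2 Hs; rewrite ltnn.
move/allPn: H => [k Hk Hn]; exists k; split => //.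
by move: Hk; rewrite mem_iota.
Qed.

Lemma bound (dist : distributive_msl (S := S)) n : (1 <= n)%N ->
  nfilter n F -> prime_upset F -> forall a : nat -> S,
  (forall i, (i <= n)%N -> F (a i)) ->
  (forall i j, (i <= n)%N -> (j <= n)%N -> i != j -> ~ F (a i `&` a j)) -> False.
Proof.
move=> Hn [Hup Hnf] pr a Ha Hinc.
set c := a 0%N `&` a 1%N.
have Hc : ~ F c by apply: Hinc.
set L := [seq (if i == j then c else a i `&` a j) | i <- iota 0 n.+1, j <- iota 0 n.+1].
have HL : forall y, y \in L -> ~ F y.
  move=> y /allpairsP [[i j] [Hi Hj ->]].
  move: Hi Hj; rewrite !mem_iota !add0n !ltnS /= => Hi Hj.
  case: eqP => [_|/eqP Hij]; first exact: Hc.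
  exact: Hinc.
have [z [Hz [_ HzL]]] := dirL pr Hc HL.
have Hpw : forall i j, (i <= n)%N -> (j <= n)%N -> i != j -> a i `&` a j <= z.
  move=> i j Hi Hj Hij; apply: HzL; apply/allpairsP; exists (i, j).
  by rewrite !mem_iota !add0n !ltnS Hi Hj /= (negbTE Hij).
have [w [Hw1 [Hw2 Hw3]]] := distD dist Hpw.
set X := map w (iota 0 n.+1).
have HX : forall x, x \in X -> F x.
  move=> x /mapP [i Hi ->]; move: Hi; rewrite mem_iota /= ltnS => Hi.
  set j := if i == 0%N then 1%N else 0%N.
  have Hj : (j <= n)%N by rewrite /j; case: (i == 0%N).
  have Hij : i != j.
    by rewrite /j; case: (eqVneq i 0%N) => [->//|H]; rewrite (negbTE H).
  apply: Hup (Hw1 _ _ Hi Hj Hij) (Ha _ Hj).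
have Hsm := Hnf (w 0%N) (map w (iota 1 n)) HX.
have HFm : F (smeet (w 0%N) (map w (iota 1 n))).
  apply: Hsm => y0 ys Hsub Hsz.
  set idx := fun y => index y X.
  have [k [Hk Hks]] : exists k, (k < n.+1)%N /\ k \notin map idx (undup (y0 :: ys)).
    by apply: pigeon; rewrite size_map.
  have Hak : a k <= smeet y0 ys.
    apply: le_smeet => y Hy.
    have HyX := Hsub _ Hy.
    have Hlt0 : (idx y < n.+1)%N by rewrite -(size_iota 0 n.+1) -(size_map w) index_mem.
    have Hyi : y = w (idx y).
      have Hlt : (idx y < n.+1)%N by rewrite -(size_iota 0 n.+1) -(size_map w) index_mem.
      rewrite -{1}(nth_index (w 0%N) HyX).
      change (w 0%N :: map w (iota 1 n)) with X.
      by rewrite /X (nth_map 0%N) ?size_iota // nth_iota.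
    have Hne : idx y != k.
      apply/eqP => E; move: Hks; rewrite -E.
      by rewrite (map_f idx) // mem_undup.
    rewrite Hyi; apply: Hw1 => //.
  apply: Hup Hak _; apply: Ha; by rewrite -ltnS.
apply: Hz; apply: Hup HFm.
apply: Hw3 => i Hi; apply: smeet_le.
change (w i \in X); apply: map_f; by rewrite mem_iota add0n ltnS.
Qed.


Definition fam (m : nat) (a : nat -> S) : Prop :=
  (forall i, (i < m)%N -> F (a i)) /\
  (forall i j, (i < m)%N -> (j < m)%N -> i != j -> ~ F (a i `&` a j)).

Lemma max_fam (b : nat) (x0 : S) :
  (forall m a, fam m a -> (m <= b)%N) ->
  exists m a, fam m a /\ forall m' a', fam m' a' -> (m' <= m)%N.
Proof.
elim: b => [|b IH] Hb.
  exists 0%N, (fun _ => x0); split; first by split.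
  move=> m' a' /Hb; by rewrite leqn0 => /eqP ->.
case: (classic (exists a, fam b.+1 a)) => [[a Ha]|Hno].
  by exists b.+1, a; split.
apply: IH => m a Hma.
have := Hb _ _ Hma; rewrite leq_eqVlt => /orP [/eqP Em|//].
by exfalso; apply: Hno; exists a; rewrite -Em.
Qed.

Lemma fam_ext1 m a x : upset F -> fam m a -> F x ->
  (forall i, (i < m)%N -> ~ F (x `&` a i)) ->
  fam m.+1 (fun j => if (j < m)%N then a j else x).
Proof.
move=> Hu [Ha Hinc] Hx Hn; split.
  by move=> i Hi; case: ifP => // Him; apply: Ha.
move=> i j Hi Hj Hij.
case: ifP => Him; case: ifP => Hjm.
- exact: Hinc.
- by rewrite meetC; apply: Hn.
- exact: Hn.
- exfalso; move: Hij.
  have -> : i = m by apply/eqP; rewrite eqn_leq -ltnS Hi leqNgt Him.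
  have -> : j = m by apply/eqP; rewrite eqn_leq -ltnS Hj leqNgt Hjm.
  by rewrite eqxx.
Qed.

Lemma fam_ext2 m a i u v : upset F -> fam m a -> (i < m)%N -> F u -> F v ->
  u <= a i -> v <= a i -> ~ F (u `&` v) ->
  fam m.+1 (fun j => if j == i then u else if (j < m)%N then a j else v).
Proof.
move=> Hu [Ha Hinc] Hi Fu Fv Hui Hvi Huv; split.
  by move=> j Hj; case: ifP => // _; case: ifP => // Hjm; apply: Ha.
have Hle : forall x j, x <= a i -> (j < m)%N -> j != i -> ~ F (x `&` a j).
  move=> x j Hx Hj Hji; apply: (nF_le Hu (leI2 Hx (lexx (a j)))).
  by apply: Hinc => //; rewrite eq_sym.
have HleC : forall x j, x <= a i -> (j < m)%N -> j != i -> ~ F (a j `&` x).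
  by move=> x j Hx Hj Hji; rewrite meetC; apply: Hle.
move=> j1 j2 Hj1 Hj2 Hj12.
case: (eqVneq j1 i) => [E1|N1].
  case: (eqVneq j2 i) => [E2|N2]; first by move: Hj12; rewrite E1 E2 eqxx.
  case: ifP => Hj2m; first exact: Hle.
  exact: Huv.
case: (eqVneq j2 i) => [E2|N2].
  case: ifP => Hj1m; first exact: HleC.
  by rewrite meetC.
case: ifP => Hj1m; case: ifP => Hj2m.
- exact: Hinc.
- exact: HleC.
- exact: Hle.
- exfalso; move: Hj12.
  have -> : j1 = m by apply/eqP; rewrite eqn_leq -ltnS Hj1 leqNgt Hj1m.
  have -> : j2 = m by apply/eqP; rewrite eqn_leq -ltnS Hj2 leqNgt Hj2m.
  by rewrite eqxx.
Qed.

End Aux.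

Section Main.
Context {d : Order.disp_t} {S : meetSemilatticeType d}.
Local Open Scope order_scope.

Lemma filter_of (G : S -> Prop) : upset G ->
  (forall x y, G x -> G y -> G (x `&` y)) -> msl_filter G.
Proof.
move=> Hu Hm; split => // x0 xs Hall _.
elim: xs Hall => [|x xs IH] Hall /=.
  by apply: Hall; exact: mem_head.
apply: Hm; first by apply: Hall; rewrite !inE eqxx orbT.
apply: IH => y; rewrite inE => /orP [/eqP ->|Hy]; apply: Hall.
  exact: mem_head.
by rewrite !inE Hy !orbT.
Qed.

Lemma filter_smeet (G : S -> Prop) x0 xs : msl_filter G ->
  (forall y, y \in x0 :: xs -> G y) -> G (smeet x0 xs).
Proof.
move=> [Hu Hf] Hall; apply: Hf => // y0 ys Hsub Hsz.
have Hy0 : G y0 by apply: Hall; apply: Hsub; exact: mem_head.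
apply: Hu Hy0; apply: le_smeet => y Hy.
suff -> : y = y0 by [].
apply/eqP; apply/negPn/negP => Hne.
have : (size [:: y; y0] <= size (undup (y0 :: ys)))%N.
  apply: uniq_leq_size; first by rewrite /= inE Hne.
  move=> t; rewrite !inE => /orP [/eqP ->|/eqP ->]; rewrite mem_undup //.
  exact: mem_head.
by move=> H; have := leq_trans H Hsz.
Qed.

Lemma filter_meet (G : S -> Prop) x y : msl_filter G -> G x -> G y -> G (x `&` y).
Proof.
move=> Hf Gx Gy; have := filter_smeet (x0 := y) (xs := [:: x]) Hf.
apply => z; rewrite !inE => /orP [/eqP ->|/eqP ->] //.
Qed.

Definition pb (P : Prop) : bool := if excluded_middle_informative P then true else false.
Lemma pbP (P : Prop) : pb P <-> P.
Proof. by rewrite /pb; case: excluded_middle_informative. Qed.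

Variable F : S -> Prop.

Lemma stepA n : distributive_msl (S := S) -> (1 <= n)%N -> upset F ->
  prime_nfilter n F ->
  exists (m : nat) (G : 'I_m -> S -> Prop),
       (m <= n)%N /\ (forall i, msl_filter (G i)) /\
       (forall x, F x <-> exists i, G i x).
Proof.
move=> dist Hn Hu [Hnf pr].
case: (classic (exists x, F x)) => [[x0 Fx0]|Hno]; last first.
  exists 0%N, (fun _ _ => False); split => //; split.
    by move=> [k Hk].
  move=> x; split => [Fx|[[k Hk]]] //.
  by exfalso; apply: Hno; exists x.
have Hb : forall m a, fam F m a -> (m <= n)%N.
  move=> m a [Ha Hinc]; rewrite leqNgt; apply/negP => Hnm.
  apply: (bound dist Hn Hnf pr (a := a)).
    by move=> i Hi; apply: Ha; apply: leq_ltn_trans Hnm.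
  by move=> i j Hi Hj; apply: Hinc; apply: leq_ltn_trans Hnm.
have [m [a [Hma Hmax]]] := max_fam x0 Hb.
exists m, (fun i x => F (x `&` a i)); split; first exact: (Hb _ _ Hma).
split.
  move=> i; apply: filter_of.
    by move=> x y Hxy; apply: Hu; apply: leI2.
  move=> x y Gx Gy; apply: NNPP => Hn'.
  have Hnuv : ~ F ((x `&` a i) `&` (y `&` a i)).
    apply: nF_le Hu _ Hn'; rewrite lexI; apply/andP; split.
      exact: leI2 (leIl _ _) (leIl _ _).
    exact: le_trans (leIl _ _) (leIr _ _).
  have := Hmax _ _ (fam_ext2 Hu Hma (ltn_ord i) Gx Gy (leIr _ _) (leIr _ _) Hnuv).
  by rewrite ltnn.
move=> x; split => [Fx|[i Gi]]; last first.
  by apply: Hu Gi; exact: leIl.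
apply: NNPP => Hno.
have Hn2 : forall i, (i < m)%N -> ~ F (x `&` a i).
  move=> i Hi Hxi; apply: Hno; by exists (Ordinal Hi).
have := Hmax _ _ (fam_ext1 Hu Hma Fx Hn2); by rewrite ltnn.
Qed.

Lemma stepB n (m : nat) (G : 'I_m -> S -> Prop) :
  prime_upset F -> (m <= n)%N -> (forall i, msl_filter (G i)) ->
  (forall x, F x <-> exists i, G i x) -> prime_nfilter n F.
Proof.
move=> pr Hmn HG HF; split => //; split; first exact: pr.1.
move=> x0 xs HX Hsub; apply: NNPP => nF.
have Hc : forall i : 'I_m, exists y, y \in x0 :: xs /\ ~ G i y.
  move=> i; apply: NNPP => H; apply: nF; apply/(HF _); exists i.
  apply: filter_smeet => // y Hy; apply: NNPP => Hn; apply: H; by exists y.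
have [c Hcc] := choice_fun Hc.
have [i0 _] : exists i : 'I_m, G i x0 by apply/(HF x0); apply: HX; exact: mem_head.
set Y := [seq c i | i <- enum 'I_m].
have HcY : forall i, c i \in Y by move=> i; apply: map_f; rewrite mem_enum.
have H1 : forall y, y \in c i0 :: Y -> y \in x0 :: xs.
  move=> y; rewrite inE => /orP [/eqP ->|/mapP [i _ ->]].
    by have [] := Hcc i0.
  by have [] := Hcc i.
have H2 : (size (undup (c i0 :: Y)) <= n)%N.
  rewrite /= HcY; apply: leq_trans (size_undup _) _.
  by rewrite size_map size_enum_ord.
have [j Gj] := (HF _).1 (Hsub (c i0) Y H1 H2).
have [_ Hn] := Hcc j; apply: Hn.
apply: (HG j).1 Gj; apply: smeet_le; by rewrite inE HcY orbT.
Qed.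

Lemma stepC n (m : nat) (G : 'I_m -> S -> Prop) :
  (m <= n)%N -> (forall i, msl_filter (G i)) ->
  (forall x, F x <-> exists i, G i x) ->
  exists h : S -> {set 'I_n}, msl_hom h /\ (forall x, F x <-> h x != set0).
Proof.
move=> Hmn HG HF.
exists (fun x => [set i : 'I_n | pb (exists j : 'I_m, nat_of_ord j = nat_of_ord i /\ G j x)]).
split.
  move=> x y; apply/setP => i; rewrite !inE.
  apply/idP/idP.
    move/pbP => [j [ej Gj]]; apply/andP; split; apply/pbP; exists j; split => //.
      by apply: (HG j).1 Gj; exact: leIl.
    by apply: (HG j).1 Gj; exact: leIr.
  move/andP => [/pbP [j [ej Gj]] /pbP [j' [ej' Gj']]].
  have E : j = j' by apply: val_inj; rewrite /= ej ej'.
  subst j'; apply/pbP; exists j; split => //; exact: filter_meet.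
move=> x; split.
  move/(HF x) => [j Gj]; apply/set0Pn; exists (widen_ord Hmn j); rewrite inE.
  by apply/pbP; exists j.
move/set0Pn => [i]; rewrite inE => /pbP [j [_ Gj]]; apply/(HF x); by exists j.
Qed.

Lemma stepD n (h : S -> {set 'I_n}) :
  msl_hom h -> (forall x, F x <-> h x != set0) ->
  exists (m : nat) (G : 'I_m -> S -> Prop),
       (m <= n)%N /\ (forall i, msl_filter (G i)) /\
       (forall x, F x <-> exists i, G i x).
Proof.
move=> Hh HF; exists n, (fun i x => i \in h x); split => //; split.
  move=> i; apply: filter_of.
    move=> x y Hxy; rewrite -(meet_l Hxy) Hh inE => /andP [].
    by [].
  by move=> x y Hx Hy; rewrite Hh inE Hx Hy.
move=> x; rewrite HF; split.
  by move/set0Pn => [i Hi]; exists i.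
by move=> [i Hi]; apply/set0Pn; exists i.
Qed.

End Main.

Theorem mainTheorem6 (d : Order.disp_t) (S : meetSemilatticeType d) (n : nat)
  (F : S -> Prop) :
  distributive_msl (S := S) -> 1 <= n -> upset F ->
  (prime_nfilter n F <->
     prime_upset F /\
     exists (m : nat) (G : 'I_m -> S -> Prop),
       m <= n /\ (forall i, msl_filter (G i)) /\
       (forall x, F x <-> exists i, G i x)) /\
  (prime_nfilter n F <->
     prime_upset F /\
     exists h : S -> {set 'I_n},
       msl_hom h /\ (forall x, F x <-> h x != set0)).
Proof.
move=> dist Hn Hu; split; split.
- move=> H; split; first exact: H.2; exact: stepA.
- move=> [pr [m [G [Hmn [HG HF]]]]]; exact: stepB pr Hmn HG HF.
- move=> H; split; first exact: H.2.
  have [m [G [Hmn [HG HF]]]] := stepA dist Hn Hu H; exact: stepC Hmn HG HF.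
- move=> [pr [h [Hh HF]]].
  have [m [G [Hmn [HG HF']]]] := stepD Hh HF; exact: stepB pr Hmn HG HF'.
Qed.
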